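(* Let $m\ge1$ and let $x_0,\dots,x_{m-1}$ be indeterminates. In the ring of $m\times m$ matrices over $\mathbb{Q}(x_0,\dots,x_{m-1})$ (rows and columns indexed by $[0,m-1]$), define $V_x=(x_j^i)_{i,j}$; $E_x=((-1)^{i-j}E_{i-j,[0,i[})_{i,j}$, where $E_{d,[0,i[}$ is the elementary symmetric polynomial of degree $d$ in $x_0,\dots,x_{i-1}$ (with $E_{0,[0,i[}=1$ and $E_{d,[0,i[}=0$ for $d<0$ or $d>i$); $L_x=(L_{i,j})_{i,j}$ with $L_{i,j}=\prod_{k\in[0,j-1]\setminus\{i\}}(x_j-x_k)\big/\prod_{k\in[0,j-1]\setminus\{i\}}(x_i-x_k)$ if $i<j$ and $L_{i,j}=0$ if $i\ge j$; and $Y_x$ the diagonal matrix with $i$th entry $\prod_{k\in[0,i-1]}(x_i-x_k)$. Then \[ E_xV_x(I-L_x)=Y_x, \] where $I$ is the identity matrix.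
   Context: $[a,b]=\{x\in\mathbb{Z}:a\le x\le b\}$. *)

(* Defs.v *)
From HB Require Import structures.
From mathcomp Require Import all_boot all_order all_algebra.
From mathcomp Require Import mpoly.
Set Implicit Arguments. Unset Strict Implicit. Unset Printing Implicit Defensive.
Import Order.TTheory GRing.Theory Num.Theory.
Local Open Scope ring_scope.

Definition QX (m : nat) := {fraction {mpoly rat[m]}}.

Definition xv (m : nat) (i : 'I_m) : QX m := FracField.tofrac ('X_i : {mpoly rat[m]}).

(* E_{d,[0,i[} : elementary symmetric polynomial of degree d in x_0,...,x_{i-1}
   (it is 0 when d > i; d = 0 gives 1). *)
Definition Esym (m : nat) (d i : nat) : QX m :=
  \sum_(S : {set 'I_m} | (#|S| == d) && [forall k in S, (k < i)%N])
     \prod_(k in S) xv k.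

Definition Vmx (m : nat) : 'M[QX m]_m := \matrix_(i, j) (xv j) ^+ i.

Definition Emx (m : nat) : 'M[QX m]_m :=
  \matrix_(i, j) (if (j <= i)%N then (-1) ^+ (i - j) * Esym m (i - j) i else 0).

Definition Lmx (m : nat) : 'M[QX m]_m :=
  \matrix_(i, j)
    (if (i < j)%N then
       (\prod_(k < m | (k < j)%N && (k != i)) (xv j - xv k)) /
       (\prod_(k < m | (k < j)%N && (k != i)) (xv i - xv k))
     else 0).

Definition Ymx (m : nat) : 'M[QX m]_m :=
  \matrix_(i, j)
    (if i == j then \prod_(k < m | (k < i)%N) (xv i - xv k) else 0).

(* Main.v *)
Require Import Defs.
From HB Require Import structures.
From mathcomp Require Import all_boot all_order all_algebra.
From mathcomp Require Import mpoly zify.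
Import GRing.Theory.
Local Open Scope ring_scope.
Lemma card_lt (m j : nat) : (j <= m)%N -> #|[pred k : 'I_m | (k < j)%N]| = j.
Proof.
move=> hj; rewrite -sum1_card -(big_ord_widen_cond m (fun _ => true) (fun _ => 1%N) hj) /=.
by rewrite sum1_card card_ord.
Qed.
Lemma xv_inj m : injective (@xv m).
Proof.
move=> i k /eqP; rewrite /xv tofrac_eq => /eqP /(congr1 (fun p : {mpoly rat[m]} => p@_U_(i))).
rewrite !mcoeffXU eqxx; case: (eqVneq k i) => // _ /eqP; rewrite oner_eq0.
Qed.

Lemma lagrange_interp (F : fieldType) (I : finType) (x : I -> F) (xinj : injective x)
  (A : pred I) (p : {poly F}) (t : F) :
  (size p <= #|A|)%N ->
  p.[t] = \sum_(l | A l) p.[x l] *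
     ((\prod_(k | A k && (k != l)) (t - x k)) / (\prod_(k | A k && (k != l)) (x l - x k))).
Proof.
move=> hsz.
pose c l := \prod_(k | A k && (k != l)) (x l - x k).
pose ell l := (c l)^-1 *: \prod_(k | A k && (k != l)) ('X - (x k)%:P).
have hell l s : (ell l).[s] = (\prod_(k | A k && (k != l)) (s - x k)) / c l.
  rewrite /ell hornerZ horner_prod mulrC; congr (_ * _).
  by apply: eq_bigr => k _; rewrite hornerXsubC.
have hc l : c l != 0.
  apply/prodf_neq0 => k /andP[_ hk].
  by rewrite subr_eq0; apply: contra hk => /eqP /xinj ->.
have hd l k : A l -> A k -> (ell k).[x l] = (l == k)%:R.
  move=> hl hk; rewrite hell; case: (eqVneq l k) => [->|hlk]; first by rewrite -/(c k) divff.
  rewrite (bigD1 l) /=; last by rewrite hl hlk.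
  by rewrite subrr mul0r mul0r.
have hsell l : A l -> (size (ell l) <= #|A|)%N.
  move=> hl; rewrite size_scale ?invr_eq0 // size_prod; last first.
    by move=> k _; rewrite polyXsubC_eq0.
  under eq_bigr do rewrite size_XsubC.
  rewrite sum_nat_const.
  have -> : #|(fun k => A k && (k != l))| = #|A|.-1.
    rewrite (cardD1 l A); have -> : l \in A by []; rewrite add1n /=; apply: eq_card => k.
    by rewrite !inE andbC.
  have : (0 < #|A|)%N by apply/card_gt0P; exists l.
  case: #|A| => // n _ /=; lia.
have hdz l k a : A l -> A k -> (a *: ell k).[x l] = a * (l == k)%:R.
  by move=> hl hk; rewrite -(hd l k) //; exact: hornerZ.
pose q := p - \sum_(l | A l) p.[x l] *: ell l.
have hq : q = 0.
  apply: (@roots_geq_poly_eq0 _ q [seq x l | l <- enum A]).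
  - apply/allP => y /mapP[l0 hl0 ->]; move: hl0; rewrite mem_enum => hl.
    rewrite /root /q hornerD hornerN horner_sum.
    rewrite (bigD1 l0) //= big1 ?addr0 ?hdz ?eqxx ?mulr1 ?subrr //.
    move=> k /andP[hk hkl]; rewrite hdz // eq_sym (negbTE hkl) mulr0 //.
  - by rewrite (map_inj_uniq xinj) enum_uniq.
  - rewrite size_map -cardE /q; apply: leq_trans (size_polyD _ _) _.
    rewrite size_polyN geq_max hsz /=.
    elim/big_ind: _ => //; first by rewrite size_poly0.
      by move=> a b ha hb; apply: leq_trans (size_polyD _ _) _; rewrite geq_max ha hb.
    by move=> l hl; apply: leq_trans (size_scale_leq _ _) _; apply: hsell.
have := congr1 (horner^~ t) hq; rewrite /q hornerD hornerN horner0 => /subr0_eq ->.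
rewrite horner_sum; apply: eq_bigr => l _; by rewrite hornerZ hell.
Qed.
Lemma prod_term (R : comNzRingType) m (y : 'I_m -> R) (i : nat) (t : R) (S : {set 'I_m}) (hi : (i <= m)%N) :
  \prod_(k < m) (if k \in S then (if (k < i)%N then - y k else 0) else (if (k < i)%N then t else 1))
  = if [forall k in S, (k < i)%N] then (-1) ^+ #|S| * \prod_(k in S) y k * t ^+ (i - #|S|) else 0.
Proof.
case: ifP => [/forall_inP hS | /negbT /forall_inPn [k hkS hk]]; last first.
  by rewrite (bigD1 k) //= hkS (negbTE hk) mul0r.
rewrite (bigID (mem S)) /=; congr (_ * _).
  rewrite -prodrN; apply: eq_bigr => k hk; by rewrite hk hS.
rewrite (eq_bigr (fun k : 'I_m => if (k < i)%N then t else 1)); last first.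
  by move=> k hk; rewrite (negbTE hk).
rewrite -big_mkcondr /= prodr_const; congr (_ ^+ _).
have := cardID (mem S) [pred k : 'I_m | (k < i)%N].
rewrite card_lt // => E; rewrite -[in RHS]E.
have -> : #|[predI [pred k : 'I_m | (k < i)%N] & mem S]| = #|S|.
  apply: eq_card => k; rewrite !inE andbC; case hk: (k \in S) => //=; exact: hS.
rewrite addKn; apply: eq_card => k; by rewrite !inE andbC.
Qed.
Lemma EV_entry (R : comNzRingType) m (y : 'I_m -> R) (i : 'I_m) (t : R) :
 \sum_(l < m) (if (l <= i)%N then (-1)^+(i-l) *
     \sum_(S : {set 'I_m} | (#|S| == i - l)%N && [forall k in S, (k < i)%N]) \prod_(k in S) y k
   else 0) * t ^+ l
 = \prod_(k < m | (k < i)%N) (t - y k).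
Proof.
rewrite [RHS]big_mkcond /=.
rewrite [RHS](eq_bigr (fun k : 'I_m => (if (k < i)%N then - y k else 0) + (if (k < i)%N then t else 1))); last first.
  by move=> k _; case: (k < i)%N; rewrite ?add0r // addrC.
rewrite [RHS]bigA_distr.
under [RHS]eq_bigr => S _ do rewrite prod_term ?(ltnW (ltn_ord i)) //.
rewrite (eq_bigr (fun l : 'I_m => \sum_(S : {set 'I_m})
   (if (l <= i)%N && (#|S| == i - l)%N && [forall k in S, (k < i)%N] then
      (-1)^+(i-l) * \prod_(k in S) y k * t ^+ l else 0))); last first.
  move=> l _; case: ifP => hl /=; last by rewrite mul0r big1.
  rewrite mulr_sumr mulr_suml big_mkcond /=; apply: eq_bigr => S _.
  by case: ifP; rewrite ?mul0r ?mulr0 // mulrA.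
rewrite exchange_big /=; apply: eq_bigr => S _.
case: ifP => hS; last first.
  by rewrite big1 // => l _; rewrite andbF.
have hSi : (#|S| <= i)%N.
  rewrite -(@card_lt m i) ?(ltnW (ltn_ord i)) //; apply: subset_leq_card.
  apply/subsetP => k hk; rewrite inE; exact: (forall_inP hS).
have hl0 : (i - #|S| < m)%N by apply: leq_ltn_trans (leq_subr _ _) (ltn_ord i).
rewrite (bigD1 (Ordinal hl0)) //= leq_subr subKn // eqxx ?andbT /= [X in _ + X]big1 ?addr0 //.
move=> l hl; case: ifP => // /andP[/andP[hli /eqP hc] _].
move: hl; have -> : l = Ordinal hl0 by apply: val_inj => /=; lia.
by rewrite eqxx.
Qed.
Lemma Pf0 m (i l : 'I_m) : (l < i)%N -> \prod_(k < m | (k < i)%N) (xv l - xv k) = 0.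
Proof. by move=> h; rewrite (bigD1 l) //= subrr mul0r. Qed.

Lemma EVE m : Emx m *m Vmx m = \matrix_(i, j) \prod_(k < m | (k < i)%N) (xv j - xv k).
Proof.
apply/matrixP => i j; rewrite !mxE -EV_entry; apply: eq_bigr => l _.
by rewrite !mxE.
Qed.

Theorem proposition1p7 (m : nat) (hm : (1 <= m)%N) :
  Emx m *m Vmx m *m (1%:M - Lmx m) = Ymx m.
Proof.
rewrite EVE mulmxBr mulmx1; apply/matrixP => i j; rewrite !mxE.
rewrite /Lmx; under [X in _ - X]eq_bigr => l _ do rewrite !mxE (fun_if (fun x => _ * x)) mulr0.
rewrite -[X in _ - X]big_mkcond /=.
case: (ltnP i j) => hij.
  have -> : i == j = false by apply/negbTE; rewrite neq_ltn hij.
  apply/eqP; rewrite subr_eq0; apply/eqP.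
  pose p := \prod_(k < m | (k < i)%N) ('X - (xv k)%:P).
  have hp s : p.[s] = \prod_(k < m | (k < i)%N) (s - xv k).
    by rewrite horner_prod; apply: eq_bigr => k _; rewrite hornerXsubC.
  rewrite -hp (@lagrange_interp _ _ (@xv m) (@xv_inj m) (fun k : 'I_m => (k < j)%N) p (xv j)).
    by apply: eq_bigr => l _; rewrite hp.
  rewrite size_prod; last by move=> k _; rewrite polyXsubC_eq0.
  under eq_bigr do rewrite size_XsubC.
  rewrite sum_nat_const.
  have ci : #|[pred k : 'I_m | (k < i)%N]| = i by exact: (@card_lt m i (ltnW (ltn_ord i))).
  have cj : #|[pred k : 'I_m | (k < j)%N]| = j by exact: (@card_lt m j (ltnW (ltn_ord j))).
  rewrite (@eq_card _ _ [pred k : 'I_m | (k < i)%N]) // ci.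
  rewrite (@eq_card _ _ [pred k : 'I_m | (k < j)%N]) // cj.
  lia.
rewrite [X in _ - X]big1 ?subr0; last first.
  by move=> l hl; rewrite (bigD1 l) /= ?subrr ?mul0r //; apply: leq_trans hl hij.
case: (eqVneq i j) => [->|hne] //.
by apply: Pf0; rewrite ltn_neqAle hij eq_sym hne.
Qed.
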